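(* Let $\mathbb{X}$ be a discrete group with identity $\circ$, and let $\mu$ be a finitely supported probability measure on $\mathbb{X}$ satisfying (A1) $\mu(xzx^{-1})=\mu(z)$ for all $x,z\in\mathbb{X}$ and (A2) $\mu(z)=\mu(z^{-1})$ for all $z\in\mathbb{X}$. Fix $z\in\mathbb{X}$ and $n\in\mathbb{N}$. There exists a function $\phi\colon\mathbb{X}^n\times[n+1]\to\mathbb{X}^{n+1}$ such that for all $(w,i)\in\mathbb{X}^n\times[n+1]$: (i) $\mathrm{val}(\phi(w,i))=\mathrm{val}(w)z$; (ii) $\mu^{\otimes(n+1)}(\phi(w,i))=\mu^{\otimes n}(w)\mu(z)$; (iii) $|\phi^{-1}(\phi(w,i))|=1+\ell_z(w)$; (iv) a sequence $\eta\in\mathbb{X}^{n+1}$ is in the image of $\phi$ if and only if $\ell_z(\eta)\neq 0$.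
   Context: $[m]=\{1,\ldots,m\}$. For a sequence $w=(w_1,\ldots,w_m)\in\mathbb{X}^m$: $\mathrm{val}(w):=w_1w_2\cdots w_m$ (the empty product being $\circ$), $\mu^{\otimes m}(w):=\prod_{j=1}^m\mu(w_j)$, and $\ell_z(w):=\sum_{j=1}^m\mathbf{1}\{w_j=(w_{j+1}\cdots w_m)\,z\,(w_{j+1}\cdots w_m)^{-1}\}$, where for $j=m$ the product $w_{j+1}\cdots w_m$ is $\circ$. *)

(* Defs.v *)
(* a (possibly infinite) discrete group is a [groupType]
   from mathcomp/boot/monoid.v; measures are real-valued on R : realType. *)
From HB Require Import structures.
From mathcomp Require Import all_boot all_order all_algebra.
From mathcomp Require Import monoid.
From mathcomp Require Import reals.
Set Implicit Arguments. Unset Strict Implicit. Unset Printing Implicit Defensive.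
Import Order.TTheory GRing.Theory Num.Theory.

Section Defs.
Variable X : groupType.

Definition valw (w : seq X) : X := foldr (fun a b => (a * b)%g) 1%g w.

(* ell_z(w) = #{ j in [m] : w_j = (w_{j+1}...w_m) z (w_{j+1}...w_m)^-1 }
   (indices here are 0-based: position j of the seq is w_{j+1}) *)
Definition ellz (z : X) (w : seq X) : nat :=
  \sum_(j < size w)
     (nth 1%g w j == (valw (drop j.+1 w) * z * (valw (drop j.+1 w))^-1)%g : nat).

Variable R : realType.

Definition mu_prod (mu : X -> R) (w : seq X) : R := \prod_(x <- w) mu x.

Definition fin_supp_prob (mu : X -> R) : Prop :=
  (forall x, 0 <= mu x)%R /\
  exists s : seq X, [/\ uniq s, (forall x, mu x != 0%R -> x \in s)
                   & (\sum_(x <- s) mu x = 1)%R].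
End Defs.

(* Main.v *)
Require Import Defs.
From HB Require Import structures.
From mathcomp Require Import all_boot all_order all_algebra.
From mathcomp Require Import monoid.
From mathcomp Require Import reals.

Set Implicit Arguments. Unset Strict Implicit. Unset Printing Implicit Defensive.
Import GRing.Theory.

Section Aux.
Variable X : groupType.
Variable z : X.

Definition cj (S : X) : X := (S * z * S^-1)%g.

Fixpoint ins (w : seq X) (i : nat) : seq X :=
  match i, w with
  | 0, _ => cj (valw w) :: w
  | _.+1, [::] => [:: cj (valw [::])]
  | k.+1, a :: w' => a :: ins w' k
  end.

Fixpoint del (w : seq X) (j : nat) : seq X :=
  match w, j with
  | [::], _ => [::]
  | _ :: w', 0 => w'
  | a :: w', k.+1 => a :: del w' k
  end.

Definition good (w : seq X) (j : nat) : bool :=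
  nth 1%g w j == cj (valw (drop j.+1 w)).

Lemma ellzE w : ellz z w = count (good w) (iota 0 (size w)).
Proof.
rewrite /ellz -(big_mkord xpredT (fun j => (nth 1%g w j ==
  (valw (drop j.+1 w) * z * (valw (drop j.+1 w))^-1)%g : nat))).
rewrite /index_iota subn0 -sum1_count [RHS]big_mkcond /=.
by apply: eq_bigr => j _; rewrite /good /cj; case: (_ == _).
Qed.

Lemma ell_cons a w : count (good (a :: w)) (iota 0 (size (a :: w))) =
  (a == cj (valw w)) + count (good w) (iota 0 (size w)).
Proof.
rewrite /= -[1]addn0 iotaDl count_map; congr (_ + _).
  by rewrite /good /= drop0.
Qed.

Lemma size_ins w i : size (ins w i) = (size w).+1.
Proof. by elim: w i => [|a w IH] [|i] //=; rewrite IH. Qed.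

Lemma valw_ins w i : valw (ins w i) = (valw w * z)%g.
Proof.
elim: w i => [|a w IH] [|i] /=.
- by rewrite /cj /= !mulg1 mul1g invg1 mulg1.
- by rewrite /cj /= !mulg1 mul1g invg1 mulg1.
- by rewrite /cj mulgVK.
- by rewrite IH mulgA.
Qed.

Lemma cjM S : cj (S * z)%g = cj S.
Proof. by rewrite /cj invgM !mulgA mulgK. Qed.

Lemma ell_ins w i : count (good (ins w i)) (iota 0 (size (ins w i))) =
  (count (good w) (iota 0 (size w))).+1.
Proof.
elim: w i => [|a w IH] [|i].
- by rewrite /= /good /= eqxx.
- by rewrite /= /good /= eqxx.
- by rewrite [ins _ 0]/= ell_cons eqxx.
- by rewrite [ins _ _]/= !ell_cons IH valw_ins cjM addnS.
Qed.

Lemma del_ins w i : i <= size w -> del (ins w i) i = w.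
Proof.
elim: w i => [|a w IH] [|i] //= Hi.
by rewrite IH.
Qed.

Lemma size_del w j : j < size w -> size (del w j) = (size w).-1.
Proof.
elim: w j => [|a w IH] [|j] //= Hj.
by rewrite IH //; case: w IH Hj.
Qed.

Lemma ins_del w j : j < size w -> (ins (del w j) j == w) = good w j.
Proof.
elim: w j => [|a w IH] [|j] //= Hj.
- by case: w IH Hj => [|b w] _ _; rewrite /good /= eqseq_cons eqxx andbT eq_sym.
- by rewrite eqseq_cons eqxx IH.
Qed.

Definition mk m (s : seq X) : m.-tuple X := insubd (nseq_tuple m 1%g) s.

Lemma val_mk m s : size s = m -> (mk m s : seq X) = s.
Proof. by move=> Hs; rewrite /mk val_insubd Hs eqxx. Qed.

End Aux.

Theorem lemma1 (X : groupType) (R : realType) (mu : X -> R)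
  (Hmu : fin_supp_prob mu)
  (A1 : forall x z : X, mu (x * z * x^-1)%g = mu z)
  (A2 : forall z : X, mu (z^-1)%g = mu z)
  (z : X) (n : nat) :
  exists phi : n.-tuple X * 'I_n.+1 -> n.+1.-tuple X,
    [/\ (forall (w : n.-tuple X) (i : 'I_n.+1), valw (phi (w, i)) = (valw w * z)%g),
        (forall (w : n.-tuple X) (i : 'I_n.+1), mu_prod mu (phi (w, i)) = (mu_prod mu w * mu z)%R),
        (forall (w : n.-tuple X) (i : 'I_n.+1), exists s : seq (n.-tuple X * 'I_n.+1),
            [/\ uniq s, size s = (1 + ellz z w)%N &
                forall p, p \in s <-> phi p = phi (w, i)])
      & (forall eta : n.+1.-tuple X,
            (exists p, phi p = eta) <-> ellz z eta <> 0%N)].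
Proof.
pose phi := fun p : n.-tuple X * 'I_n.+1 => mk n.+1 (ins z p.1 p.2).
have vphi p : (phi p : seq X) = ins z p.1 p.2.
  by rewrite val_mk // size_ins size_tuple.
have ephi p q : phi p = phi q <-> ins z p.1 p.2 = ins z q.1 q.2.
  split; first by move/(congr1 val) => /=; rewrite !vphi.
  by move=> e; apply: val_inj; rewrite /= !vphi.
pose back (eta : seq X) (j : nat) : n.-tuple X * 'I_n.+1 :=
  (mk n (del eta j), inord j).
have Hback (eta : n.+1.-tuple X) j : j < n.+1 -> good z eta j ->
    phi (back eta j) = eta.
  move=> Hj Hg; apply: val_inj; rewrite /= vphi /= val_mk; last first.
    by rewrite size_del size_tuple.
  by rewrite inordK //; apply/eqP; rewrite ins_del // size_tuple.
exists phi; split.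
- by move=> w i; rewrite vphi valw_ins.
- move=> w i; rewrite vphi /mu_prod /=.
  elim: (tval w) (nat_of_ord i) => [|a s IH] [|k] /=;
    rewrite ?big_cons ?big_nil /cj ?A1 ?mulr1 ?mul1r //.
    by rewrite mulrC.
  by rewrite IH mulrA.
- move=> w i; set eta := phi (w, i).
  exists (map (back eta) (filter (good z eta) (iota 0 n.+1))); split.
  + rewrite map_inj_in_uniq ?filter_uniq ?iota_uniq //.
    move=> j1 j2; rewrite !mem_filter !mem_iota /= => /andP[_ H1] /andP[_ H2].
    by case=> _ /(congr1 val); rewrite /= !inordK.
  + rewrite size_map size_filter.
    transitivity (count (good z (ins z w i)) (iota 0 (size (ins z w i)))).
      by rewrite /eta vphi size_ins size_tuple.
    by rewrite ell_ins ellzE.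
  + case=> w' j; split.
    * case/mapP=> k; rewrite mem_filter mem_iota /= => /andP[Hg Hk] ->.
      by rewrite Hback.
    * move=> /ephi E; rewrite /= in E.
      apply/mapP; exists (nat_of_ord j).
        rewrite mem_filter mem_iota /= ltn_ord andbT /eta vphi /= -E.
        have H := @ins_del _ z (ins z w' j) j; rewrite size_ins ltnS in H. rewrite -H; last by rewrite size_tuple -ltnS.
        by apply/eqP; congr (ins z _ _); apply: del_ins; rewrite size_tuple -ltnS.
      rewrite /back /=; congr (_, _); last by rewrite inord_val.
      apply: val_inj; rewrite val_mk /= -E; last by rewrite size_ins size_tuple.
      transitivity (del (ins z w' j) j).
        by symmetry; apply: del_ins; rewrite size_tuple -ltnS.
      by symmetry; apply: val_mk; rewrite size_del size_ins ?size_tuple.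
- move=> eta; split.
  + case=> [[w i]] <-; rewrite ellzE.
    have Ev := vphi (w, i); rewrite /= in Ev.
    by rewrite Ev ell_ins.
  + move=> H.
    have : has (good z eta) (iota 0 n.+1).
      by rewrite has_count lt0n; move: H; rewrite ellzE size_tuple => H; apply/eqP.
    case/hasP => j; rewrite mem_iota => /andP[_ Hj] Hg.
    by exists (back eta j); exact: Hback.
Qed.
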